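(* Let $\mathbb{F}$ be a field with $\operatorname{char}(\mathbb{F})\neq 2$ and let $G$ be a non-abelian group with a group involution $\ast$ and a non-identity orientation $\sigma:G\to\{\pm1\}$ such that $gg^\ast\in N=\ker\sigma$ for all $g\in G$. Then $\mathbb{F}G$ is normal with respect to the oriented group involution $\circledast$ if and only if one of the following holds: (1) $N$ is abelian, $G\setminus N\subseteq G^+$, and $n^\ast=a^{-1}na=ana^{-1}$ for all $n\in N$ and all $a\in G\setminus N$; (2) $N$ and $G$ are LC-groups, $G$ has a unique non-identity commutator $s$, there exists $g_0\in(G\setminus N)\cap\zeta(G)$ with $g_0^\ast=sg_0$, and $\ast$ is given by $g^\ast=g$ if $g\in N\cap\zeta(G)$ or $g\in(G\setminus N)\setminus\zeta(G)$, and $g^\ast=sg$ otherwise.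
   Context: A group involution on $G$ is a map $\ast:G\to G$ with $(gh)^\ast=h^\ast g^\ast$ and $(g^\ast)^\ast=g$. An orientation is a group homomorphism $\sigma:G\to\{\pm1\}$. The oriented group involution is $(\sum_g\alpha_g g)^\circledast=\sum_g\alpha_g\sigma(g)g^\ast$ on $\mathbb{F}G$ (an algebra involution because $gg^\ast\in\ker\sigma$). $\mathbb{F}G$ is normal if $\alpha\alpha^\circledast=\alpha^\circledast\alpha$ for all $\alpha\in\mathbb{F}G$. $G^+=\{g\in G:g^\ast=g\}$, $\zeta(G)$ is the center of $G$, $(g,h)=g^{-1}h^{-1}gh$, and ''unique non-identity commutator $s$'' means $\{(g,h):g,h\in G\}=\{1,s\}$. A group $H$ is an LC-group if it is non-abelian and for all $g,h\in H$: $gh=hg$ iff at least one of $g,h,gh$ lies in $\zeta(H)$. *)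

(* Defs.v *)
(* G is an arbitrary (possibly infinite) group, modelled by
   MathComp's [groupType] from boot/monoid.v.  *)
From HB Require Import structures.
From mathcomp Require Import all_boot all_algebra.
Set Implicit Arguments. Unset Strict Implicit. Unset Printing Implicit Defensive.
Import GRing.Theory.

Section Defs.
Variable G : groupType.

Definition is_group_involution (star : G -> G) : Prop :=
  (forall g h : G, star (g * h)%g = (star h * star g)%g) /\
  (forall g : G, star (star g) = g).

Definition is_orientation (sigma : G -> int) : Prop :=
  (forall g : G, sigma g = 1%R \/ sigma g = (-1)%R) /\
  (forall g h : G, sigma (g * h)%g = (sigma g * sigma h)%R).

Definition kerO (sigma : G -> int) : pred G := fun g => sigma g == 1%R.

Definition abelian_on (H : pred G) : Prop :=
  forall g h, H g -> H h -> (g * h)%g = (h * g)%g.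

Definition center_of (H : pred G) (z : G) : Prop :=
  H z /\ (forall y, H y -> (z * y)%g = (y * z)%g).

Definition LC_group (H : pred G) : Prop :=
  ~ abelian_on H /\
  forall g h, H g -> H h ->
    ((g * h)%g = (h * g)%g <->
     (center_of H g \/ center_of H h \/ center_of H (g * h)%g)).

Definition unique_nonid_commutator (s : G) : Prop :=
  s != 1%g /\ (forall g h : G, commg g h = 1%g \/ commg g h = s) /\
  (exists g h : G, commg g h = s).

(* The group algebra F G: elements are formal finite linear combinations,
   represented by lists of (group element, coefficient) pairs. *)
Variable F : fieldType.
Definition FG := seq (G * F).

Definition coef (a : FG) (x : G) : F := (\sum_(p <- a | p.1 == x) p.2)%R.

Definition FGmul (a b : FG) : FG :=
  [seq ((p.1 * q.1)%g, (p.2 * q.2)%R) | p <- a, q <- b].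

Definition oinv (star : G -> G) (sigma : G -> int) (a : FG) : FG :=
  [seq (star p.1, (p.2 * (sigma p.1)%:~R)%R) | p <- a].

(* F G is normal w.r.t. the oriented involution: equality in F G is equality
   of coefficient functions *)
Definition FG_normal (star : G -> G) (sigma : G -> int) : Prop :=
  forall a : FG, forall x : G,
    coef (FGmul a (oinv star sigma a)) x = coef (FGmul (oinv star sigma a) a) x.

End Defs.

(* Main.v *)
Require Import Defs.
From HB Require Import structures.
From mathcomp Require Import all_boot all_algebra.
From mathcomp Require Import ring.
From Stdlib Require Import Classical.
Set Implicit Arguments. Unset Strict Implicit. Unset Printing Implicit Defensive.
Import GRing.Theory.

Section Grp.
Variables (G : groupType) (star : G -> G) (sigma : G -> int).
Hypothesis Hinv : is_group_involution star.
Hypothesis Hor : is_orientation sigma.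
Hypothesis Hgg : forall g : G, kerO sigma (g * star g)%g.
Local Open Scope group_scope.
Local Notation N := (kerO sigma).

Lemma starM x y : star (x * y) = star y * star x. Proof. by case: Hinv. Qed.
Lemma starK x : star (star x) = x. Proof. by case: Hinv. Qed.
Lemma star1 : star 1 = 1.
Proof. have := starM 1 1; rewrite mulg1 => h. by apply: (mulgI (star 1)); rewrite mulg1 -h. Qed.
Lemma starV x : star x^-1 = (star x)^-1.
Proof. have := starM x x^-1; rewrite mulgV star1 => h. by rewrite -(mulg1_eq (esym h)) invgK. Qed.

Lemma NM x y : N (x * y) = (N x == N y).
Proof.
case: Hor => Hv Hm; rewrite /kerO Hm.
by case: (Hv x) => ->; case: (Hv y) => ->.
Qed.
Lemma N1 : N 1.
Proof. have := NM 1 1; rewrite mulg1. by case: (N 1). Qed.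
Lemma NV x : N x^-1 = N x.
Proof. have := NM x x^-1; rewrite mulgV N1. by case: (N x); case: (N x^-1). Qed.
Lemma Nstar x : N (star x) = N x.
Proof. have := NM x (star x); rewrite Hgg. by case: (N x); case: (N (star x)). Qed.


Definition central (x : G) := forall y, x * y = y * x.
Lemma centralM a b : central a -> central b -> central (a * b).
Proof. move=> ca cb y; by rewrite -mulgA (cb y) mulgA (ca y) mulgA. Qed.

Lemma NVM a y : ~~ N a -> ~~ N y -> N (a^-1 * y).
Proof. by rewrite NM NV => /negbTE -> /negbTE ->. Qed.

Lemma allcomm_N a : abelian_on N -> ~~ N a -> (forall n, N n -> n * a = a * n) ->
  abelian_on (fun _ : G => true).
Proof.
move=> ab Na H.
have ca : central a.
  move=> y; case Ny: (N y); first by rewrite (H y Ny).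
  rewrite -(mulVKg a y); apply: commuteM; first exact: commute_refl.
  apply: commute_sym; apply: H; apply: NVM => //; by rewrite Ny.
have cN : forall n, N n -> central n.
  move=> n Nn y; case Ny: (N y); first exact: ab.
  rewrite -(mulVKg a y); apply: commuteM; first exact: H.
  apply: ab => //; apply: NVM => //; by rewrite Ny.
have cG : forall x, central x.
  move=> x; case Nx: (N x); first exact: cN.
  rewrite -(mulVKg a x); apply: centralM => //; apply: cN; apply: NVM => //; by rewrite Nx.
by move=> x y _ _; apply: cG.
Qed.

Definition Qc (g k : G) := g * k <> k * g ->
  (N g = N k -> star (g * k) = k * g) /\ (N g <> N k -> star (g * k) = g * k).

Section Forward.
Hypothesis HQ : forall g k, Qc g k.

Lemma stepA n a : N n -> ~~ N a -> n * a <> a * n -> star a = a /\ star n = a^-1 * (n * a).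
Proof.
move=> Nn Na nc.
have h1 : star (n * a) = n * a.
  case: (HQ nc) => _ H; apply: H; by rewrite Nn (negbTE Na).
have nc2 : a * (n * a) <> (n * a) * a.
  move=> e; apply: nc; apply: (mulIg a); by rewrite -e mulgA.
have h2 : star (a * (n * a)) = n * a * a.
  case: (HQ nc2) => H _; apply: H; by rewrite NM Nn (negbTE Na).
rewrite starM h1 in h2.
have sa : star a = a by apply: (mulgI (n * a)).
split => //.
rewrite starM sa in h1. by rewrite -h1 mulKg.
Qed.

Lemma case1 : abelian_on N -> ~ abelian_on (fun _ : G => true) ->
  (forall g, ~~ N g -> star g = g) /\
  (forall n a, N n -> ~~ N a -> star n = a^-1 * n * a /\ star n = a * n * a^-1).
Proof.
move=> ab nab.
have wit : forall a, ~~ N a -> exists n, N n /\ n * a <> a * n.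
  move=> a Na; apply: NNPP => hn; apply: nab; apply: (allcomm_N ab Na).
  move=> n Nn; apply: NNPP => e; apply: hn; by exists n.
have sA : forall a, ~~ N a -> star a = a.
  move=> a Na; case: (wit a Na) => n [Nn nc]; by case: (stepA Nn Na nc).
have key : forall n a, N n -> ~~ N a -> n * a <> a * n ->
    star n = a^-1 * n * a /\ star n = a * n * a^-1.
  move=> n a Nn Na nc; case: (stepA Nn Na nc) => sa sn; split; first by rewrite sn mulgA.
  have nc' : a * n <> n * a by move=> e; apply: nc; rewrite e.
  case: (HQ nc') => _ H.
  have e : star (a * n) = a * n by apply: H; rewrite Nn (negbTE Na).
  rewrite starM sa in e; by rewrite -e mulgK.
split=> // n a Nn Na.
case: (classic (n * a = a * n)) => [c|nc]; last exact: key.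
case: (wit a Na) => n0 [Nn0 nc0].
have nc1 : n0 * n * a <> a * (n0 * n).
  move=> e; apply: nc0; apply: (mulIg n).
  by rewrite -mulgA -c mulgA e !mulgA.
have Nn0n : N (n0 * n) by rewrite NM Nn0 Nn.
case: (key _ _ Nn0n Na nc1) => e1 _.
case: (key _ _ Nn0 Na nc0) => e2 _.
have sn : star n = n.
  rewrite starM e2 in e1.
  have Nc : N (a^-1 * n0 * a) by rewrite !NM NV Nn0; case: (N a).
  have Ns : N (star n) by rewrite Nstar.
  rewrite (ab _ _ Ns Nc) in e1.
  apply: (mulgI (a^-1 * n0 * a)); rewrite e1.
  by rewrite -!mulgA c.
rewrite sn; split.
  by rewrite -mulgA c mulKg.
by rewrite -c mulgK.
Qed.

Lemma tN x y : N x -> N y -> x * y <> y * x -> star x = [~ x, y] * x.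
Proof.
move=> Nx Ny nc.
have h1 : star (x * y) = y * x by case: (HQ nc) => H _; apply: H; rewrite Nx Ny.
have nc2 : x * (x * y) <> (x * y) * x.
  move=> e; apply: nc; apply: (mulgI x); by rewrite e mulgA.
have h2 : star (x * (x * y)) = x * y * x.
  case: (HQ nc2) => H _; apply: H; by rewrite NM Nx Ny.
rewrite starM h1 in h2.
apply: (mulgI (y * x)); rewrite h2 /commg /conjg !mulgA mulgK mulgV mul1g //.
Qed.

Lemma comm_props x y : N x -> N y -> x * y <> y * x ->
  [/\ star x = [~ x, y] * x, star y = [~ x, y] * y, [~ x, y] * x = x * [~ x, y],
      [~ x, y] * y = y * [~ x, y] & [~ x, y] * [~ x, y] = 1].
Proof.
move=> Nx Ny nc.
have nc' : y * x <> x * y by move=> e; apply: nc; rewrite e.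
have sx := tN Nx Ny nc.
have sy := tN Ny Nx nc'.
rewrite -invgR in sy.
set c := [~ x, y] in sx sy *. clearbody c.
have cy : c * y = y * c.
  have h : star (x * y) = y * x by case: (HQ nc) => H _; apply: H; rewrite Nx Ny.
  rewrite starM sx sy !mulgA in h.
  have h' : c^-1 * y * c = y by apply: (mulIg x).
  by rewrite -{1}h' !mulgA mulgV mul1g.
have cx : c * x = x * c.
  have h : star (y * x) = x * y by case: (HQ nc') => H _; apply: H; rewrite Nx Ny.
  rewrite starM sx sy !mulgA in h.
  have h' : c * x * c^-1 = x by apply: (mulIg y).
  by rewrite -{2}h' mulgVK.
have NxV : N x^-1 by rewrite NV.
have ncV : x^-1 * y <> y * x^-1.
  move=> e; apply: nc; apply: (mulgI x^-1); apply: (mulIg x^-1).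
  by rewrite mulKg -mulgA mulgK e.
have ncV' : y * x^-1 <> x^-1 * y by move=> e; apply: ncV; rewrite e.
have e1 := tN NxV Ny ncV.
rewrite starV sx invgM in e1.
have cxV : x^-1 * c^-1 = c^-1 * x^-1 by rewrite -!invgM cx.
rewrite cxV in e1.
have e1' : [~ x^-1, y] = c^-1 by apply: (mulIg x^-1).
have e2 := tN Ny NxV ncV'.
rewrite sy in e2.
have e2' : [~ y, x^-1] = c^-1 by apply: (mulIg y).
rewrite -invgR e1' invgK in e2'.
have cc : c * c = 1 by rewrite {2}e2' mulgV.
split => //.
by rewrite sy -e2'.
Qed.

Definition tt (x : G) := star x * x^-1.
Lemma ttK x : star x = tt x * x. Proof. by rewrite /tt mulgVK. Qed.

Lemma t_eq x y : N x -> N y -> x * y <> y * x -> tt x = [~ x, y] /\ tt y = [~ x, y].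
Proof.
move=> Nx Ny nc; case: (comm_props Nx Ny nc) => sx sy _ _ _.
by rewrite /tt sx sy !mulgK.
Qed.

Lemma t_same x y : N x -> N y -> x * y <> y * x -> tt x = tt y.
Proof. by move=> Nx Ny nc; case: (t_eq Nx Ny nc) => -> ->. Qed.

Variables m k : G.
Hypotheses (Nm : N m) (Nk : N k) (ncmk : m * k <> k * m).
Variable s : G.
Hypothesis Hs : s = [~ m, k].

Lemma tm : tt m = s. Proof. by rewrite Hs; case: (t_eq Nm Nk ncmk). Qed.
Lemma tk : tt k = s. Proof. by rewrite Hs; case: (t_eq Nm Nk ncmk). Qed.

Lemma tN_s x y : N x -> N y -> x * y <> y * x -> tt x = s.
Proof.
move=> Nx Ny nc.
case: (classic (x * m = m * x)) => xm; last by rewrite (t_same Nx Nm xm) tm.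
case: (classic (x * k = k * x)) => xk; last by rewrite (t_same Nx Nk xk) tk.
case: (classic (y * m = m * y)) => ym; first last.
  by rewrite (t_same Nx Ny nc) (t_same Ny Nm ym) tm.
case: (classic (y * k = k * y)) => yk; first last.
  by rewrite (t_same Nx Ny nc) (t_same Ny Nk yk) tk.
have Nxm : N (x * m) by rewrite NM Nx Nm.
have nc1 : x * m * y <> y * (x * m).
  move=> e; apply: nc; apply: (mulIg m).
  by rewrite -mulgA ym mulgA e mulgA.
have nc2 : x * m * k <> k * (x * m).
  move=> e; apply: ncmk; apply: (mulgI x).
  by rewrite mulgA e mulgA -xk -mulgA.
by rewrite (t_same Nx Ny nc) -(t_same Nxm Ny nc1) (t_same Nxm Nk nc2) tk.
Qed.

Lemma Ns : N s.
Proof. by rewrite Hs /commg /conjg !NM !NV Nm Nk. Qed.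

Lemma ss : s * s = 1.
Proof. by rewrite Hs; case: (comm_props Nm Nk ncmk). Qed.

Lemma sV : s^-1 = s.
Proof. by apply: mulg1_eq; exact: ss. Qed.

Lemma s_ne1 : s <> 1.
Proof. move=> e; apply: ncmk; apply/commgP; by rewrite -Hs e. Qed.

Lemma s_commN n : N n -> n * s = s * n.
Proof.
move=> Nn.
case: (classic (exists y, N y /\ n * y <> y * n)) => [[y [Ny nc]]|H].
  case: (comm_props Nn Ny nc) => _ _ cx _ _.
  have : tt n = [~ n, y] by case: (t_eq Nn Ny nc).
  rewrite (tN_s Nn Ny nc) => ->; by rewrite cx.
apply: NNPP => e; apply: H; exists s; split => //; exact: Ns.
Qed.

Lemma zN z : N z -> (forall y, N y -> z * y = y * z) -> star z = z.
Proof.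
move=> Nz cz.
have Nzm : N (z * m) by rewrite NM Nz Nm.
have nc : z * m * k <> k * (z * m).
  move=> e; apply: ncmk; apply: (mulgI z).
  by rewrite mulgA e mulgA -(cz k Nk) -mulgA.
have e1 : star (z * m) = s * (z * m) by rewrite ttK (tN_s Nzm Nk nc).
rewrite starM (ttK m) tm (cz m Nm) in e1.
apply: (mulgI (s * m)). by rewrite e1 mulgA.
Qed.

Lemma zcent z : N z -> (forall y, N y -> z * y = y * z) -> central z.
Proof.
move=> Nz cz a; apply: NNPP => nc.
have Na : ~~ N a.
  apply/negP => Na; by apply: nc; apply: cz.
have nc' : z * a <> a * z by [].
case: (stepA Nz Na nc') => _ e.
rewrite (zN Nz cz) in e.
apply: nc; by rewrite {2}e mulVKg.
Qed.

Lemma s_central : central s.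
Proof. apply: zcent; first exact: Ns. move=> y Ny; by rewrite (s_commN Ny). Qed.

Lemma fNnc n : N n -> ~ central n -> star n = s * n.
Proof.
move=> Nn ncn.
case: (classic (exists y, N y /\ n * y <> y * n)) => [[y [Ny nc]]|H].
  by rewrite ttK (tN_s Nn Ny nc).
exfalso; apply: ncn; apply: zcent => // y Ny; apply: NNPP => e; apply: H; by exists y.
Qed.

Lemma fAnc a : ~~ N a -> ~ central a -> star a = a.
Proof.
move=> Na nca.
case: (classic (exists n, N n /\ n * a <> a * n)) => [[n [Nn nc]]|H].
  by case: (stepA Nn Na nc).
exfalso; apply: nca => y.
have H' : forall n, N n -> n * a = a * n.
  move=> n Nn; apply: NNPP => e; apply: H; by exists n.
case Ny: (N y); first by rewrite (H' y Ny).
rewrite -(mulVKg a y); apply: commuteM; first exact: commute_refl.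
apply: commute_sym; apply: H'; apply: NVM => //; by rewrite Ny.
Qed.

Lemma fNc n : N n -> central n -> star n = n.
Proof. move=> Nn cn; apply: zN => // y _; exact: cn. Qed.

Lemma fAc a : ~~ N a -> central a -> star a = s * a.
Proof.
move=> Na ca.
have Nam : ~~ N (a * m) by rewrite NM Nm; case: (N a) Na.
have nc : ~ central (a * m).
  move=> c; apply: ncmk; apply: (mulgI a).
  by rewrite mulgA (c k) mulgA -(ca k) -mulgA.
have e := fAnc Nam nc.
rewrite starM (ttK m) tm (ca m) (s_central m) -mulgA in e.
have e' : s * star a = a by apply: (mulgI m).
by apply: (mulgI s); rewrite e' mulgA ss mul1g.
Qed.

Lemma commTF x y : N x -> ~~ N y -> x * y <> y * x -> [~ x, y] = s.
Proof.
move=> Nx Ny nc.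
case: (stepA Nx Ny nc) => _ e.
have ncx : ~ central x by move=> c; apply: nc; apply: c.
rewrite (fNnc Nx ncx) in e.
by rewrite /commg /conjg -e s_central mulKg.
Qed.

Lemma commFT x y : ~~ N x -> N y -> x * y <> y * x -> [~ x, y] = s.
Proof.
move=> Nx Ny nc.
have nc' : y * x <> x * y by move=> e; apply: nc; rewrite e.
by rewrite -invgR (commTF Ny Nx nc') sV.
Qed.

Lemma comm_vals x y : [~ x, y] = 1 \/ [~ x, y] = s.
Proof.
case: (classic (x * y = y * x)) => c.
  by left; apply/eqP/commgP.
right.
case Nx: (N x); case Ny: (N y).
- by rewrite -(proj1 (t_eq Nx Ny c)) (tN_s Nx Ny c).
- by apply: commTF => //; rewrite Ny.
- by apply: commFT => //; rewrite Nx.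
have Nn : N (x^-1 * y) by apply: NVM; rewrite ?Nx ?Ny.
have ey : [~ x, y] = [~ x, x^-1 * y].
  rewrite /commg /conjg !invgM invgK !mulgA mulgK.
  done.
rewrite ey; apply: commFT => //; first by rewrite Nx.
move=> e; apply: c.
by rewrite mulVKg in e; rewrite {1}e !mulgA mulgV mul1g.
Qed.

Lemma fnc u : ~ central u -> star u = if N u then s * u else u.
Proof.
move=> nc; case Nu: (N u); first exact: fNnc.
by apply: fAnc => //; rewrite Nu.
Qed.

Lemma LCcore g h : g * h = h * g -> ~ central g -> ~ central h -> central (g * h).
Proof.
move=> c ng nh; apply: NNPP => ngh.
have eg := fnc ng; have eh := fnc nh; have egh := fnc ngh.
rewrite starM NM eg eh in egh.
have sc := s_central.
apply: s_ne1; apply: (mulIg (g * h)).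
case: (N g) egh; case: (N h) => /= egh.
- have e : s * h * (s * g) = g * h.
    by rewrite -mulgA (mulgA h s g) -(sc h) -mulgA mulgA ss mul1g -c.
  by rewrite mul1g -egh.
- have e : h * (s * g) = s * (g * h) by rewrite mulgA -(sc h) -mulgA -c.
  by rewrite mul1g -e egh.
- have e : s * h * g = s * (g * h) by rewrite -mulgA -c.
  by rewrite mul1g -e egh.
- by rewrite mul1g -egh c.
Qed.

Lemma nc_comm x y : x * y <> y * x -> [~ x, y] = s.
Proof.
move=> nc; case: (comm_vals x y) => // e; exfalso; apply: nc; apply/commgP; by rewrite e.
Qed.

Lemma g0_exists a0 : ~~ N a0 -> exists g0, ~~ N g0 /\ central g0.
Proof.
move=> Na0.
have sc := s_central.
case: (classic (central a0)) => ca; first by exists a0.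
have ncm : ~ central m by move=> c; apply: ncmk; apply: c.
have nck : ~ central k by move=> c; apply: ncmk; rewrite (c m).
case: (classic (a0 * m = m * a0)) => am.
  exists (a0 * m); split; last exact: LCcore.
  by rewrite NM Nm; case: (N a0) Na0.
case: (classic (a0 * k = k * a0)) => ak.
  exists (a0 * k); split; last exact: LCcore.
  by rewrite NM Nk; case: (N a0) Na0.
have h1 : m * k = k * m * s by rewrite (commgC m k) -Hs.
have h2 : a0 * k = k * a0 * s by rewrite (commgC a0 k) (nc_comm ak).
have c2 : a0 * m * k = k * (a0 * m).
  rewrite -mulgA h1 !mulgA h2.
  rewrite -[k * a0 * s * m]mulgA (sc m) mulgA -mulgA ss mulg1 //.
have ncx : ~ central (a0 * m).
  move=> c; apply: am; apply: (mulIg m); by rewrite (c m) mulgA.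
exists (a0 * m * k); split; last exact: LCcore.
by rewrite !NM Nm Nk; case: (N a0) Na0.
Qed.

Lemma cen_iff g : center_of (fun _ : G => true) g <-> central g.
Proof. split; [by case => _ H y; apply: H | by move=> H; split => // y _; apply: H]. Qed.

Lemma centM_comm g h : (forall y, N y -> (g * h) * y = y * (g * h)) -> N g -> g * h = h * g.
Proof.
move=> c Ng; apply: (mulgI g); by rewrite -(c g Ng) mulgA.
Qed.

Lemma LC_G : ~ abelian_on (fun _ : G => true) -> LC_group (fun _ : G => true).
Proof.
move=> nab; split => // g h _ _; rewrite !cen_iff; split.
  move=> c; case: (classic (central g)) => cg; first by left.
  case: (classic (central h)) => ch; first by right; left.
  by right; right; apply: LCcore.
case=> [cg|[ch|cgh]]; first exact: cg.
  by rewrite (ch g).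
apply: (mulgI g); by rewrite -(cgh g) mulgA.
Qed.

Lemma LC_N : LC_group N.
Proof.
split.
  move=> ab; apply: ncmk; exact: ab.
move=> g h Ng Nh; split.
  move=> c.
  case: (classic (forall y, N y -> g * y = y * g)) => cg; first by left; split.
  case: (classic (forall y, N y -> h * y = y * h)) => ch; first by right; left; split.
  have ng : ~ central g by move=> C; apply: cg => y _; apply: C.
  have nh : ~ central h by move=> C; apply: ch => y _; apply: C.
  right; right; split; first by rewrite NM Ng Nh.
  move=> y _; exact: (LCcore c ng nh).
case=> [[_ cg]|[[_ ch]|[_ cgh]]]; first exact: cg.
  by rewrite (ch g Ng).
exact: centM_comm.
Qed.

Lemma case2 a0 : ~ abelian_on (fun _ : G => true) -> ~~ N a0 ->
    (LC_group N /\ LC_group (fun _ : G => true) /\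
     unique_nonid_commutator s /\
       (exists g0 : G, ~~ N g0 /\ center_of (fun _ => true) g0 /\
                       star g0 = (s * g0)%g) /\
       (forall g : G,
          let Zg := center_of (fun _ => true) g in
          let Ng := N g in
          (((Ng /\ Zg) \/ (~ Ng /\ ~ Zg)) -> star g = g) /\
          (~ ((Ng /\ Zg) \/ (~ Ng /\ ~ Zg)) -> star g = (s * g)%g))).
Proof.
move=> nab Na0.
split; first exact: LC_N.
split; first exact: LC_G.
split.
  split; first by apply/eqP; exact: s_ne1.
  split; first exact: comm_vals.
  by exists m, k; rewrite Hs.
split.
  case: (g0_exists Na0) => g0 [Ng0 cg0]; exists g0; split => //; split; first exact/cen_iff.
  exact: fAc.
move=> g /=.
case Ng: (N g); case: (classic (central g)) => cg.
- split; first by move=> _; exact: fNc.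
  move=> H; exfalso; apply: H; left; split => //; exact/cen_iff.
- split; last by move=> _; exact: fNnc.
  case=> [[_ /cen_iff //]|[]] //.
- split; last by move=> _; apply: fAc => //; rewrite Ng.
  case=> [[] //|[_ /(_ (proj2 (cen_iff g) cg))] //].
- split; first by move=> _; apply: fAnc => //; rewrite Ng.
  move=> H; exfalso; apply: H; right; split => // /cen_iff //.
Qed.

End Forward.

Lemma back1 : abelian_on N -> (forall g, ~~ N g -> star g = g) ->
  (forall n a, N n -> ~~ N a -> star n = a^-1 * n * a /\ star n = a * n * a^-1) ->
  forall g k, Qc g k.
Proof.
move=> ab sA sN g k nc.
case Ng: (N g); case Nk: (N k).
- by exfalso; apply: nc; apply: ab; rewrite ?Ng ?Nk.
- split=> // _. rewrite starM (sA k) ?Nk //.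
  case: (sN g k) => //; rewrite ?Nk // => -> _.
  by rewrite !mulgA mulgV mul1g.
- split=> // _. rewrite starM (sA g) ?Ng //.
  case: (sN k g) => //; rewrite ?Ng // => _ ->.
  by rewrite mulgVK.
split=> // _.
have Ngk : N (g * k) by rewrite NM Ng Nk.
case: (sN (g * k) g Ngk) => [|-> _]; first by rewrite Ng.
by rewrite mulKg.
Qed.

Lemma back2 s : unique_nonid_commutator s ->
  (forall g : G,
          let Zg := center_of (fun _ => true) g in
          let Ng := N g in
          (((Ng /\ Zg) \/ (~ Ng /\ ~ Zg)) -> star g = g) /\
          (~ ((Ng /\ Zg) \/ (~ Ng /\ ~ Zg)) -> star g = (s * g)%g)) ->
  forall g k, Qc g k.
Proof.
case=> /eqP s1 [vals [x0 [y0 exy]]] form.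
have sV : s^-1 = s.
  case: (vals y0 x0) => e0.
    by exfalso; apply: s1; rewrite -exy -invgR e0 invg1.
  by rewrite -exy invgR e0 exy.
have sc : central s.
  move=> z.
  have ez : s ^ z = s.
    rewrite -exy conjRg.
    case: (vals (x0 ^ z) (y0 ^ z)) => e0; rewrite e0 ?exy //.
    exfalso; apply: s1; apply/eqP.
    by rewrite -(conjg_eq1 _ z) -exy conjRg e0.
  by rewrite -{2}ez mulVKg.
have ss : s * s = 1 by move: (mulVg s); rewrite sV.
have fnc : forall u, ~ central u -> star u = if N u then s * u else u.
  move=> u nu; case: (form u) => /= f1 f2; case Nu: (N u).
    apply: f2; case=> [[_ /cen_iff //]|[]] //.
  apply: f1; right; split; [by rewrite Nu | by move/cen_iff].
move=> g k nc.
have cgk : [~ g, k] = s.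
  case: (vals g k) => // e; exfalso; apply: nc; apply/commgP; by rewrite e.
have egk : g * k = k * g * s by rewrite (commgC g k) cgk.
have ng : ~ central g by move=> c; apply: nc; apply: c.
have nk : ~ central k by move=> c; apply: nc; rewrite (c g).
rewrite starM (fnc g ng) (fnc k nk).
case Ng: (N g); case Nk: (N k); split => //= _.
- by rewrite -mulgA (mulgA k s g) -(sc k) -mulgA mulgA ss mul1g.
- by rewrite egk (sc g) !mulgA.
- by rewrite egk -mulgA -(sc (k * g)) mulgA.
Qed.

End Grp.

Section FGsec.
Variables (F : fieldType) (G : groupType) (star : G -> G) (sigma : G -> int).
Hypothesis Hinv : is_group_involution star.
Hypothesis Hor : is_orientation sigma.
Hypothesis Hgg : forall g : G, kerO sigma (g * star g)%g.
Hypothesis H2 : ~~ (2 \in [pchar F])%R.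
Local Notation N := (kerO sigma).
Local Open Scope ring_scope.

Lemma two_neq0 : (2%:R : F) != 0.
Proof. apply/negP => /eqP e; move: H2; by rewrite inE /= e eqxx. Qed.

Definition sg (g : G) : F := (sigma g)%:~R.
Definition ind (b : bool) : F := if b then 1 else 0.

Lemma sgv g : (sg g = 1 /\ N g) \/ (sg g = -1 /\ ~~ N g).
Proof.
rewrite /sg /kerO; case: Hor => Hv _; case: (Hv g) => ->; by [left | right].
Qed.

Lemma sg_eq g k : N g = N k -> sg g = sg k.
Proof.
by case: (sgv g) => [[-> ->]|[-> /negbTE ->]]; case: (sgv k) => [[-> ->]|[-> /negbTE ->]].
Qed.

Lemma sg_neq g k : N g <> N k -> sg k = - sg g.
Proof.
case: (sgv g) => [[-> ->]|[-> /negbTE ->]]; case: (sgv k) => [[-> ->]|[-> /negbTE ->]] //.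
by rewrite opprK.
Qed.

Lemma sg_star k : sg (star k) = sg k.
Proof. apply: sg_eq; exact: Nstar. Qed.

Definition X x u v : F := sg v * ind ((u * star v)%g == x).
Definition Y x u v : F := sg u * ind ((star u * v)%g == x).

Lemma coefL a x : coef (FGmul a (oinv star sigma a)) x =
  \sum_(p <- a) \sum_(q <- a) (p.2 * q.2 * X x p.1 q.1).
Proof.
rewrite /coef /FGmul big_mkcond big_allpairs_dep /=.
apply: eq_bigr => p _; rewrite /oinv big_map; apply: eq_bigr => q _ /=.
rewrite /X /ind /sg; case: (_ == x); ring.
Qed.

Lemma coefR a x : coef (FGmul (oinv star sigma a) a) x =
  \sum_(p <- a) \sum_(q <- a) (p.2 * q.2 * Y x p.1 q.1).
Proof.
rewrite /coef /FGmul big_mkcond big_allpairs_dep /= /oinv big_map.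
apply: eq_bigr => p _; apply: eq_bigr => q _ /=.
rewrite /Y /ind /sg; case: (_ == x); ring.
Qed.

Definition Pc (g h : G) x := X x g h + X x h g = Y x g h + Y x h g.

Lemma normal_P : FG_normal F star sigma -> forall g h x, Pc g h x.
Proof.
move=> Hn g h x.
have e := Hn [:: (g, 1); (h, 1)] x.
have e1 := Hn [:: (g, 1)] x.
have e2 := Hn [:: (h, 1)] x.
rewrite coefL coefR !big_cons !big_nil /= !mul1r !addr0 in e.
rewrite coefL coefR !big_cons !big_nil /= !mul1r !addr0 in e1.
rewrite coefL coefR !big_cons !big_nil /= !mul1r !addr0 in e2.
rewrite /Pc; apply/eqP; rewrite -subr_eq0; apply/eqP.
transitivity ((X x g g + X x g h + (X x h g + X x h h)) - (Y x g g + Y x g h + (Y x h g + Y x h h))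
   - (X x g g - Y x g g) - (X x h h - Y x h h)); first ring.
by rewrite e e1 e2 !subrr.
Qed.

Lemma P_normal : (forall g h x, Pc g h x) -> FG_normal F star sigma.
Proof.
move=> HP a x; rewrite coefL coefR.
set S1 := \sum_(p <- a) _; set S2 := \sum_(p <- a) _.
have e : S1 + S1 = S2 + S2.
  have -> : S1 + S1 = \sum_(p <- a) \sum_(q <- a) (p.2 * q.2 * (X x p.1 q.1 + X x q.1 p.1)).
    rewrite {2}/S1 exchange_big -big_split /=; apply: eq_bigr => p _.
    rewrite -big_split /=; apply: eq_bigr => q _; ring.
  have -> : S2 + S2 = \sum_(p <- a) \sum_(q <- a) (p.2 * q.2 * (Y x p.1 q.1 + Y x q.1 p.1)).
    rewrite {2}/S2 exchange_big -big_split /=; apply: eq_bigr => p _.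
    rewrite -big_split /=; apply: eq_bigr => q _; ring.
  apply: eq_bigr => p _; apply: eq_bigr => q _; by rewrite HP.
apply: (mulfI two_neq0); by rewrite !mulr2n mulrDl !mul1r e mulrDl !mul1r.
Qed.

Lemma key_b (e : F) b1 b2 : (e = 1 \/ e = -1) -> e * ind b1 = e * ind b2 + e -> b1.
Proof.
move=> he; case: b1 => // H; exfalso.
have h0 : (ind b2 + 1) * e = 0.
  by rewrite mulrDl mul1r mulrC -H /ind mulr0.
clear H; move/eqP: h0; rewrite mulf_eq0 => /orP [|].
  case: b2; rewrite /ind.
    by rewrite -mulr2n -[_ *+ 2]/(2%:R) (negbTE two_neq0).
  by rewrite add0r oner_eq0.
by case: he => ->; rewrite ?oppr_eq0 oner_eq0.
Qed.

Lemma Q_P : (forall g k, Qc star sigma g k) -> forall g h x, Pc g h x.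
Proof.
move=> HQ g h x; rewrite -(starK Hinv h); move: (star h) => k.
rewrite /Pc /X /Y !(starK Hinv) -!(starM Hinv) !sg_star.
case: (classic ((g * k)%g = (k * g)%g)) => c.
  by rewrite c addrC.
have c' : (k * g)%g <> (g * k)%g by move=> e; apply: c; rewrite e.
case: (HQ g k c) => s1 d1; case: (HQ k g c') => s2 d2.
case: (classic (N g = N k)) => eN.
  rewrite (s1 eN) (s2 (esym eN)) (sg_eq eN); by rewrite addrC.
have eN' : N k <> N g by move=> e; apply: eN; rewrite e.
rewrite (d1 eN) (d2 eN') (sg_neq eN); ring.
Qed.

Lemma P_Q : (forall g h x, Pc g h x) -> forall g k, Qc star sigma g k.
Proof.
move=> HP g k nc.
have P1 := HP g (star k) (k * g)%g.
have P2 := HP g (star k) (g * k)%g.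
rewrite /Pc /X /Y !(starK Hinv) -!(starM Hinv) !sg_star in P1.
rewrite /Pc /X /Y !(starK Hinv) -!(starM Hinv) !sg_star in P2.
have n1 : ((g * k)%g == (k * g)%g) = false by apply/eqP.
have n2 : ((k * g)%g == (g * k)%g) = false by apply/eqP => e; apply: nc; rewrite e.
rewrite n1 eqxx in P1; rewrite n2 eqxx in P2.
have he : sg g = 1 \/ sg g = -1 by case: (sgv g) => [[-> _]|[-> _]]; [left|right].
split.
  move=> eN; rewrite -(sg_eq eN) /ind mulr0 add0r -/(ind _) -/(ind _) mulr1 in P1.
  apply/eqP; apply: (key_b he); exact: P1.
move=> eN; rewrite (sg_neq eN) in P2.
apply/eqP; apply: (key_b (b2 := star (k * g)%g == (g * k)%g) he).
move: P2; rewrite /ind mulr1 mulr0 addr0 => P2.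
rewrite -P2; ring.
Qed.

Lemma FG_iff : FG_normal F star sigma <-> forall g k, Qc star sigma g k.
Proof.
split.
  move=> Hn; apply: P_Q; exact: normal_P.
move=> HQ; apply: P_normal; exact: Q_P.
Qed.

End FGsec.

Theorem theorem5 (F : fieldType) (G : groupType) (star : G -> G) (sigma : G -> int) :
  ~~ (2 \in [pchar F])%R ->
  ~ abelian_on (fun _ : G => true) ->
  is_group_involution star ->
  is_orientation sigma ->
  (exists g : G, sigma g != 1%R) ->
  (forall g : G, kerO sigma (g * star g)%g) ->
  FG_normal F star sigma <->
  ( (* (1) *)
    (abelian_on (kerO sigma) /\
     (forall g : G, ~~ kerO sigma g -> star g = g) /\
     (forall n a : G, kerO sigma n -> ~~ kerO sigma a ->
        star n = (a^-1 * n * a)%g /\ star n = (a * n * a^-1)%g))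
  \/
    (* (2) *)
    (LC_group (kerO sigma) /\ LC_group (fun _ : G => true) /\
     exists s : G, unique_nonid_commutator s /\
       (exists g0 : G, ~~ kerO sigma g0 /\ center_of (fun _ => true) g0 /\
                       star g0 = (s * g0)%g) /\
       (forall g : G,
          let Zg := center_of (fun _ => true) g in
          let Ng := kerO sigma g in
          (((Ng /\ Zg) \/ (~ Ng /\ ~ Zg)) -> star g = g) /\
          (~ ((Ng /\ Zg) \/ (~ Ng /\ ~ Zg)) -> star g = (s * g)%g)))).
Proof.
move=> H2 nab Hinv Hor [a0 Na0] Hgg.
apply: iff_trans; first exact: (FG_iff Hinv Hor Hgg H2).
split.
  move=> HQ.
  case: (classic (abelian_on (kerO sigma))) => ab.
    by left; case: (case1 Hinv Hor Hgg HQ ab nab) => A B.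
  right.
  have [m [k [Nm [Nk ncmk]]]] : exists m k, kerO sigma m /\ kerO sigma k /\ (m * k <> k * m)%g.
    apply: NNPP => H; apply: ab => m k Nm Nk; apply: NNPP => e; apply: H.
    by exists m, k.
  case: (case2 Hinv Hor HQ Nm Nk ncmk (erefl _) nab Na0) => L1 [L2 [U [G0 Fm]]].
  split => //; split => //; by exists (commg m k).
case=> [[ab [A B]]|[_ [_ [s [U [_ Fm]]]]]].
  move=> g k; exact: (back1 Hinv Hor ab A B).
move=> g k; exact: (back2 Hinv U Fm).
Qed.
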